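(* Let $G$ be a graph that has exactly three odd cycles. Then the intersection of every two of its odd cycles is either empty or a path.
   Context: All graphs are finite and simple. An odd cycle is a cycle (subgraph) of odd length. A path may consist of a single vertex. *)

(* Defs.v *)
From mathcomp Require Import all_boot.
Set Implicit Arguments. Unset Strict Implicit. Unset Printing Implicit Defensive.

(* A finite simple graph: vertex type T : finType, adjacency g : rel T,
   symmetric and irreflexive. A subgraph is a pair (vertex set, edge set),
   where an edge is represented by the 2-element vertex set {x, y}. *)
Definition subgraph (T : finType) := ({set T} * {set {set T}})%type.


Definition is_cycle_len (T : finType) (g : rel T) (C : subgraph T) (k : nat) : Prop :=
  exists s : seq T,
    [/\ uniq s, 3 <= size s, size s = k, cycle g s &
        C.1 = [set x in s]] /\
        C.2 = [set [set x; next s x] | x in s].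

Definition is_odd_cycle (T : finType) (g : rel T) (C : subgraph T) : Prop :=
  exists k, is_cycle_len g C k /\ odd k.

Definition is_path_sub (T : finType) (g : rel T) (C : subgraph T) : Prop :=
  exists (x : T) (p : seq T),
    [/\ uniq (x :: p), path g x p,
        C.1 = [set y in x :: p] &
        C.2 = [set [set q.1; q.2] | q in zip (x :: p) p]].

Definition sub_inter (T : finType) (C D : subgraph T) : subgraph T :=
  (C.1 :&: D.1, C.2 :&: D.2).

Definition sub_empty (T : finType) (C : subgraph T) : Prop := C.1 = set0 /\ C.2 = set0.

(* Main.v *)
Require Import Defs.
From mathcomp Require Import all_boot zify.
Set Implicit Arguments. Unset Strict Implicit. Unset Printing Implicit Defensive.


Section Aux.
Variable T : finType.
Implicit Types (x y z a b : T) (s p t : seq T).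

Definition pe x p : {set {set T}} := [set [set q.1; q.2] | q in zip (x :: p) p].

Lemma pe_nil x : pe x [::] = set0.
Proof. by apply/setP => e; rewrite inE; apply/imsetP => -[q]. Qed.

Lemma pe_cons x a s : pe x (a :: s) = [set x; a] |: pe a s.
Proof.
apply/setP => e; rewrite !inE; apply/imsetP/orP.
  move=> [q]; rewrite /= inE => /orP[/eqP -> -> | qin ->]; first by left.
  by right; apply/imsetP; exists q.
case=> [/eqP -> | /imsetP [q qin ->]]; first by exists (x, a); rewrite // inE eqxx.
by exists q; rewrite //= inE qin orbT.
Qed.

Lemma pe_cat x s1 s2 : pe x (s1 ++ s2) = pe x s1 :|: pe (last x s1) s2.
Proof.
elim: s1 x => [|a s1 IH] x /=; first by rewrite pe_nil set0U.
by rewrite !pe_cons IH setUA.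
Qed.

Lemma pe1 x z : pe x [:: z] = [set [set x; z]].
Proof. by rewrite pe_cons pe_nil setU0. Qed.

Lemma set2C' a b : [set a; b] = [set b; a].
Proof. by rewrite /= setUC. Qed.

Lemma pe_rev x p z : pe z (rev p ++ [:: x]) = pe x (p ++ [:: z]).
Proof.
elim: p x => [|a p IH] x /=; first by rewrite !pe1 set2C'.
rewrite rev_cons -cats1 pe_cat IH last_cat /= pe_cons pe_nil setU0.
by rewrite pe_cons setUC set2C'.
Qed.

Lemma set2_eq a b c d : [set a; b] = [set c; d] ->
  (a = c /\ b = d) \/ (a = d /\ b = c).
Proof.
move=> E.
have ha : a \in [set c; d] by rewrite -E set21.
have hb : b \in [set c; d] by rewrite -E set22.
have hc : c \in [set a; b] by rewrite E set21.
have hd : d \in [set a; b] by rewrite E set22.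
by case/set2P: ha => ?; case/set2P: hb => ?; case/set2P: hc => ?;
  case/set2P: hd => ?; subst; auto.
Qed.

Section Frel.
Variable f : T -> T.

Lemma pe_frel_in y s e : path (frel f) y s -> e \in pe y s ->
  exists2 u, u \in belast y s & e = [set u; f u].
Proof.
elim: s y => [|a s IH] y /=; first by rewrite pe_nil inE.
case/andP=> /eqP fy pa; rewrite pe_cons in_setU => /orP[/set1P ->|].
  by exists y; rewrite ?inE ?eqxx ?fy.
by case/(IH _ pa) => u uin ->; exists u; rewrite // inE uin orbT.
Qed.

Lemma pe_frel_out y s u : path (frel f) y s -> u \in belast y s ->
  [set u; f u] \in pe y s.
Proof.
elim: s y => [|a s IH] y /=; first by [].
case/andP=> /eqP fy pa; rewrite pe_cons in_setU in_cons => /orP[/eqP ->|uin].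
  by rewrite fy in_set1 eqxx.
by rewrite (IH _ pa uin) orbT.
Qed.

Lemma path_closure (Q : pred T) y s : path (frel f) y s -> Q y ->
  (forall u, u \in belast y s -> Q u -> Q (f u)) -> all Q (y :: s).
Proof.
elim: s y => [|a s IH] y /=; first by move=> _ ->.
case/andP=> /eqP fy pa Qy H; rewrite Qy /=.
apply: IH => //; first by rewrite -fy; apply: H; rewrite // inE eqxx.
by move=> u uin; apply: H; rewrite inE uin orbT.
Qed.
End Frel.

End Aux.


Section Cyc.
Variable T : finType.
Implicit Types (x y z a b u v : T) (s p t c d r : seq T).

Definition Cof c : subgraph T := ([set v in c], [set [set v; next c v] | v in c]).

Lemma cyc_edges a t : uniq (a :: t) ->
  [set [set v; next (a :: t) v] | v in a :: t] = pe a (t ++ [:: a]).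
Proof.
move=> U; have P := cycle_next U; rewrite /cycle -cats1 in P.
apply/setP => e; apply/imsetP/idP.
  move=> [v vin ->]; apply: (pe_frel_out P).
  by rewrite cats1 belast_rcons.
by case/(pe_frel_in P) => u; rewrite cats1 belast_rcons => uin ->; exists u.
Qed.

Lemma rot_Cof i c : uniq c -> Cof (rot i c) = Cof c.
Proof.
move=> U; rewrite /Cof; congr (_, _).
  by apply/setP => v; rewrite !inE mem_rot.
apply/setP => e; apply/imsetP/imsetP => -[v vin ->]; exists v;
  rewrite ?(next_rot i U) //.
- by rewrite -(mem_rot i).
- by rewrite (mem_rot i).
Qed.

Lemma rot_frel i c x r : uniq c -> rot i c = x :: r ->
  path (frel (next c)) x (r ++ [:: x]).
Proof.
move=> U E; have U' : uniq (x :: r) by rewrite -E rot_uniq.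
have := cycle_next U'; rewrite /cycle cats1.
apply: sub_path => u w /=.
by have := next_rot i U u; rewrite E /= => ->.
Qed.

Lemma rot_Cof2 i c x r : uniq c -> rot i c = x :: r ->
  (Cof c).2 = pe x (r ++ [:: x]).
Proof.
move=> U E; rewrite -(rot_Cof i U) /= E cyc_edges //.
by rewrite -E rot_uniq.
Qed.

Lemma edge_mem c a b : [set a; b] \in (Cof c).2 -> a \in c /\ b \in c.
Proof.
case/imsetP => v vin /set2_eq [[-> ->]|[-> ->]]; by rewrite mem_next.
Qed.

Lemma edge_nbr c a b : uniq c -> [set a; b] \in (Cof c).2 ->
  b = next c a \/ b = prev c a.
Proof.
move=> U /imsetP [v vin /set2_eq [[-> ->]|[-> ->]]]; first by left.
by right; rewrite prev_next.
Qed.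

Lemma nnd c u : uniq c -> 3 <= size c -> u \in c -> next c (next c u) != u.
Proof.
move=> U S uin; case: (rot_to uin) => i r E.
rewrite -!(next_rot i U) E.
have U' : uniq (u :: r) by rewrite -E rot_uniq.
have S' : 3 <= size (u :: r) by rewrite -E size_rot.
case: r E U' S' => [|a [|b r]] // E U' _.
move: U'; rewrite /= !inE !negb_or => /andP[/and3P[ua ub _] /andP[/andP[ab _] _]].
by rewrite eqxx (eq_sym a u) (negbTE ua) eqxx eq_sym.
Qed.

Variable g : rel T.
Lemma mk_odd s : uniq s -> 3 <= size s -> cycle g s -> odd (size s) ->
  is_odd_cycle g (Cof s).
Proof. by move=> U S C O; exists (size s); split=> //; exists s. Qed.

End Cyc.


Lemma Hs (n1 n2 n3 : nat) : (n1 + n3).+2 + (n2 + n3).+2 = (n1 + n2).+2 + (n3.+1).*2.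
Proof. by rewrite -addnn; lia. Qed.

Section Seg.
Variable T : finType.
Variable g : rel T.
Hypothesis gsym : symmetric g.
Implicit Types (x y z a b u v : T) (s p t c d r : seq T).

Lemma seg_cycle c x p z :
  uniq c -> 3 <= size c -> odd (size c) -> cycle g c ->
  x \in c -> z \in c -> z != x -> (forall v, v \in p -> v \notin c) -> uniq p ->
  path g x (p ++ [:: z]) -> [set x; head z p] \notin (Cof c).2 ->
  exists O : subgraph T, [/\ is_odd_cycle g O,
     O.2 \subset (Cof c).2 :|: pe x (p ++ [:: z]) &
     [set x; head z p] \in O.2].
Proof.
move=> Uc Sc Oc Cc xc zc zx pc Up Pp notC.
case: (rot_to xc) => i w E.
have C2 := rot_Cof2 Uc E.
have zw : z \in w.
  by move: zc; rewrite -(mem_rot i) E inE (negbTE zx).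
case/splitPr: zw E C2 => w1 w2 E C2.
have Uc' : uniq (x :: w1 ++ z :: w2) by rewrite -E rot_uniq.
have Cc' : cycle g (x :: w1 ++ z :: w2) by rewrite -E rot_cycle.
have Sc' : size c = (size w1 + size w2).+2.
  by rewrite -(size_rot i) E /= size_cat /= addnS.
have inc v : v \in x :: w1 ++ z :: w2 -> v \in c by rewrite -E mem_rot.
have eC2 : (Cof c).2 = pe x (w1 ++ [:: z]) :|: pe z (w2 ++ [:: x]).
  by rewrite C2 -catA /= -cat1s catA pe_cat last_cat.
have Hedge : [set x; head z p] \in pe x (p ++ [:: z]).
  by case: p {pc Up Pp notC} => [|a p] /=; rewrite pe_cons !inE eqxx.
have Pp1 : path g x (w1 ++ [:: z]) /\ path g z (w2 ++ [:: x]).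
  move: Cc'; rewrite /cycle /= -cats1 -catA /= -cat1s catA cat_path last_cat.
  by case/andP.
have Prev : path g z (rev p ++ [:: x]).
  have := rev_path g x (p ++ [:: z]).
  rewrite cats1 last_rcons belast_rcons rev_cons -cats1 => ->.
  move: Pp; rewrite cats1.
  by apply: sub_path => a b /=; rewrite gsym.
have pnc v : v \in p -> v \notin x :: w1 ++ z :: w2.
  by move/pc; apply: contra => /inc.
set sa := x :: w1 ++ z :: rev p.
set sb := z :: w2 ++ x :: p.
have Ua : uniq sa.
  have -> : sa = (x :: w1 ++ [:: z]) ++ rev p by rewrite /sa /= -catA.
  rewrite cat_uniq rev_uniq Up andbT.
  apply/andP; split.
    have E' : x :: w1 ++ z :: w2 = (x :: w1 ++ [:: z]) ++ w2 by rewrite /= -catA.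
    by move: Uc'; rewrite E' cat_uniq => /andP[].
  apply/hasPn => v; rewrite mem_rev => /pnc; apply: contra.
  move=> H; rewrite !(inE,mem_cat) in H *.
  by case/orP: H => [->|/orP[->|->]]; rewrite ?orbT.
have Ub : uniq sb.
  have -> : sb = (z :: w2 ++ [:: x]) ++ p by rewrite /sb /= -catA.
  rewrite cat_uniq Up andbT.
  apply/andP; split.
    have E' : x :: w1 ++ z :: w2 = (x :: w1) ++ (z :: w2) by [].
    rewrite E' uniq_catC in Uc'.
    have E'' : (z :: w2) ++ x :: w1 = (z :: w2 ++ [:: x]) ++ w1 by rewrite /= -catA.
    by move: Uc'; rewrite E'' cat_uniq => /andP[].
  apply/hasPn => v /pnc; apply: contra.
  move=> H; rewrite !(inE,mem_cat) in H *.
  by case/orP: H => [->|/orP[->|->]]; rewrite ?orbT.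
have Ca : cycle g sa.
  rewrite /sa /cycle -cats1 /= -catA /= -cat1s catA cat_path last_cat /=.
  by rewrite Prev (proj1 Pp1).
have Cb : cycle g sb.
  rewrite /sb /cycle -cats1 /= -catA /= -cat1s catA cat_path last_cat /=.
  by rewrite Pp (proj2 Pp1).
have Ea : (Cof sa).2 = pe x (w1 ++ [:: z]) :|: pe x (p ++ [:: z]).
  rewrite /= cyc_edges // -catA /= -cat1s catA pe_cat last_cat /=.
  by rewrite pe_rev.
have Eb : (Cof sb).2 = pe z (w2 ++ [:: x]) :|: pe x (p ++ [:: z]).
  rewrite /= cyc_edges // -catA /= -cat1s catA pe_cat last_cat /=.
  by [].
have Sa : size sa = (size w1 + size p).+2.
  by rewrite /sa /= size_cat /= size_rev addnS.
have Sb : size sb = (size w2 + size p).+2.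
  by rewrite /sb /= size_cat /= addnS.
have Sa3 : 3 <= size sa.
  rewrite Sa; case E1: w1 => [|a w1']; case E2: p => [|b p'] //.
  by move: notC; rewrite eC2 E1 E2 /= pe1 !inE eqxx.
have Sb3 : 3 <= size sb.
  rewrite Sb; case E1: w2 => [|a w2']; case E2: p => [|b p'] //.
  by move: notC; rewrite eC2 E1 E2 /= pe1 set2C' !inE eqxx orbT.
have Hodd : odd (size sa) || odd (size sb).
  have : odd (size sa + size sb).
    have -> : size sa + size sb = size c + (size p).+1.*2.
      by rewrite Sa Sb Sc' Hs.
    by rewrite oddD odd_double addbF.
  by rewrite oddD; case: (odd (size sa)); case: (odd (size sb)).
case/orP: Hodd => Ho.
  exists (Cof sa); split; first exact: mk_odd.
    by rewrite Ea eC2; apply/subsetP => e; rewrite !inE => /orP[->|->]; rewrite ?orbT.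
  by rewrite Ea inE Hedge orbT.
exists (Cof sb); split; first exact: mk_odd.
  by rewrite Eb eC2; apply/subsetP => e; rewrite !inE => /orP[->|->]; rewrite ?orbT.
by rewrite Eb inE Hedge orbT.
Qed.
End Seg.


Section Sub.
Variable T : finType.
Implicit Types (x y z a b u v : T) (s p t c d r : seq T).

Lemma sub_cycle_eq c d : uniq c -> 3 <= size c -> uniq d -> 3 <= size d ->
  (Cof d).2 \subset (Cof c).2 -> Cof c = Cof d.
Proof.
move=> Uc Sc Ud Sd /subsetP sub.
have H1 x : x \in d -> x \in c /\ (next c x = next d x \/ next c x = prev d x).
  move=> xd.
  have e1 : [set x; next d x] \in (Cof c).2 by apply: sub; apply/imsetP; exists x.
  have yd : prev d x \in d by rewrite mem_prev.
  have e2 : [set x; prev d x] \in (Cof c).2.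
    apply: sub; rewrite set2C'; rewrite -{2}(next_prev Ud x).
    by apply/imsetP; exists (prev d x).
  have xc := (edge_mem e1).1; split => //.
  have ne : next d x != prev d x.
    apply/eqP => E; have := nnd Ud Sd yd.
    by rewrite next_prev // E eqxx.
  case: (edge_nbr Uc e1) => E1; first by left.
  case: (edge_nbr Uc e2) => E2; first by right.
  by move: ne; rewrite E1 E2 eqxx.
have H2 v : v \in c -> v \in d.
  case Ed: d Sd => [|x0 r0] // _.
  have x0d : x0 \in d by rewrite Ed inE eqxx.
  have x0c := (H1 _ x0d).1.
  case: (rot_to x0c) => i r E.
  have P := rot_frel Uc E.
  have := path_closure P (Q := fun u => u \in d) x0d.
  rewrite -Ed => /(_ _) H.
  have {}H : all (fun u => u \in d) (x0 :: r ++ [:: x0]).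
    apply: H => u _ ud; case: (H1 _ ud) => _ [->|->].
      by rewrite mem_next.
    by rewrite mem_prev.
  move=> vc; have : v \in rot i c by rewrite mem_rot.
  rewrite E => vin; move/allP: H; apply.
  by move: vin; rewrite !(inE, mem_cat) => /orP[->|->]; rewrite ?orbT.
rewrite /Cof; congr (_, _).
  apply/setP => v; rewrite !inE; apply/idP/idP; first exact: H2.
  by move/H1 => [].
apply/eqP; rewrite eqEsubset; apply/andP; split; last by apply/subsetP.
apply/subsetP => e /imsetP [v vc ->].
have vd := H2 _ vc.
case: (H1 _ vd) => _ [->|->]; first by apply/imsetP; exists v.
rewrite set2C'; apply/imsetP; exists (prev d v); first by rewrite mem_prev.
by rewrite next_prev.
Qed.
End Sub.


Section Main.
Variable T : finType.
Variable g : rel T.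
Hypothesis gsym : symmetric g.
Implicit Types (x y z a b u v w : T) (s p t r : seq T).
Variables c d : seq T.
Hypotheses (Uc : uniq c) (Sc : 3 <= size c) (Oc : odd (size c)) (Cc : cycle g c).
Hypotheses (Ud : uniq d) (Sd : 3 <= size d) (Od : odd (size d)) (Cd : cycle g d).

Definition ex v := (v \in c) && ([set v; next d v] \notin (Cof c).2).

Lemma fp x t z e : (forall v, v \in t -> v \notin c) ->
  e \in pe x (t ++ [:: z]) -> e \in (Cof c).2 -> e = [set x; head z t].
Proof.
elim: t x => [|a t IH] x /= tc; first by rewrite pe1 => /set1P.
rewrite pe_cons in_setU => /orP[/set1P -> //|ein eC].
have := IH a (fun v vt => tc v (mem_behead (s := a :: t) vt)) ein eC => E.
rewrite E in eC; have := (edge_mem eC).1.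
by rewrite (negbTE (tc a (mem_head _ _))).
Qed.

Lemma segD x y : x \in d -> ex x -> y \in d -> y \in c -> y != x ->
  exists O : subgraph T, [/\ is_odd_cycle g O, [set x; next d x] \in O.2 &
    forall w, w \in d -> w \in c -> w != x -> [set w; next d w] \notin (Cof c).2 ->
      [set w; next d w] \notin O.2].
Proof.
move=> xd /andP[xc exC] yd yc yx.
case: (rot_to xd) => i r E.
have Fr := rot_frel Ud E.
have Ud' : uniq (x :: r) by rewrite -E rot_uniq.
have Cd' : cycle g (x :: r) by rewrite -E rot_cycle.
have ind v : v \in x :: r -> v \in d by rewrite -E mem_rot.
have yr : y \in r by move: yd; rewrite -(mem_rot i) E inE (negbTE yx).
have hasr : has (fun v => v \in c) r by apply/hasP; exists y.
move: E Fr Ud' Cd' ind; case: (split_find hasr) => z t r2 zc nt E Fr Ud' Cd' ind.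
rewrite cat_rcons in E Fr Ud' Cd' ind.
have tc v : v \in t -> v \notin c.
  by move=> vt; apply/negP => vc; move/hasP: nt; apply; exists v.
have Esplit : (t ++ z :: r2) ++ [:: x] = (t ++ [:: z]) ++ (r2 ++ [:: x]).
  by rewrite -!catA.
have Fp : path (frel (next d)) x (t ++ [:: z]).
  by move: Fr; rewrite Esplit cat_path => /andP[].
have Pp : path g x (t ++ [:: z]).
  by move: Cd'; rewrite /cycle -cats1 /= Esplit cat_path => /andP[].
have hx : next d x = head z t.
  by case: (t) Fp => [|a t'] /= /andP[/eqP].
have zx : z != x.
  apply/negP => /eqP zx; move: Ud'; rewrite /= mem_cat inE zx eqxx orbT.
  by [].
have Ut : uniq t.
  by move: Ud'; rewrite cons_uniq cat_uniq => /andP[_ /andP[]].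
have notC : [set x; head z t] \notin (Cof c).2 by rewrite -hx.
have [O [Oodd Osub Oin]] := seg_cycle gsym Uc Sc Oc Cc xc zc zx tc Ut Pp notC.
exists O; split => //; first by rewrite hx.
move=> w wd wc wx wC; apply/negP => wO.
have : [set w; next d w] \in pe x (t ++ [:: z]).
  by move/subsetP: Osub => /(_ _ wO); rewrite in_setU (negbTE wC).
case/(pe_frel_in Fp) => u; rewrite cats1 belast_rcons => uin /set2_eq.
have ud : u \in d by apply: ind; move: uin; rewrite !inE mem_cat => /orP[->|->]; rewrite ?orbT.
case=> [[wu _]|[wu nw]].
  move: uin; rewrite inE -wu (negbTE wx) /= => /tc.
  by rewrite wc.
have := nnd Ud Sd ud; by rewrite -wu -nw eqxx.
Qed.
Lemma noexit : (forall w, w \in d -> ~~ ex w) -> Cof c <> Cof d ->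
  sub_empty (sub_inter (Cof c) (Cof d)).
Proof.
move=> nex CD.
case: (boolP (has (fun v => v \in c) d)) => [/hasP [v vd vc]|hn].
  exfalso; apply: CD; apply: sub_cycle_eq => //.
  have alld : forall u, u \in d -> u \in c.
    case: (rot_to vd) => i r E.
    have Fr := rot_frel Ud E.
    have := path_closure Fr (Q := fun u => u \in c) vc.
    move=> /(_ _) H.
    have {}H : all (fun u => u \in c) (v :: r ++ [:: v]).
      apply: H => u uin uc.
      have ud : u \in d.
        by rewrite -(mem_rot i) E; move: uin; rewrite cats1 belast_rcons.
      have := nex u ud; rewrite /ex uc /= negbK => /edge_mem [].
      by [].
    move=> u; rewrite -(mem_rot i) E => uin; move/allP: H; apply.
    by move: uin; rewrite !(inE, mem_cat) => /orP[->|->]; rewrite ?orbT.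
  apply/subsetP => e /imsetP [u ud ->].
  by have := nex u ud; rewrite /ex (alld u ud) /= negbK.
split; apply/setP => v; rewrite !inE.
  by apply/negP => /andP[vc vd]; move/hasPn: hn => /(_ v vd); rewrite vc.
apply/negP => /andP[vC /imsetP [u ud E]].
rewrite E in vC; have := (edge_mem vC).1.
by move/hasPn: hn => /(_ u ud) /negbTE ->.
Qed.

Lemma oneexit x : x \in d -> ex x -> (forall w, w \in d -> ex w -> w = x) ->
  is_path_sub g (sub_inter (Cof c) (Cof d)).
Proof.
move=> xd /andP[xc exC] uniqx.
case: (rot_to xd) => i r E.
have Fr := rot_frel Ud E.
have D2 := rot_Cof2 Ud E.
have Ud' : uniq (x :: r) by rewrite -E rot_uniq.
have Cd' : cycle g (x :: r) by rewrite -E rot_cycle.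
have ind v : (v \in d) = (v \in x :: r) by rewrite -E mem_rot.
have D1 : (Cof d).1 = [set v in x :: r] by apply/setP => v; rewrite !inE ind.
have hx : next d x = head x r.
  by case: (r) Fr => [|a r'] /= /andP[/eqP].
case: (boolP (has (fun v => v \in c) r)) => [hasr|hn].
  move: E Fr Ud' Cd' ind D1 D2 hx; case: (split_find hasr) => z t r2 zc nt E Fr Ud' Cd' ind D1 D2 hx.
  rewrite cat_rcons in E Fr Ud' Cd' ind D1 D2 hx.
  have tc v : v \in t -> v \notin c.
    by move=> vt; apply/negP => vc; move/hasP: nt; apply; exists v.
  have Esplit : (t ++ z :: r2) ++ [:: x] = (t ++ [:: z]) ++ (r2 ++ [:: x]).
    by rewrite -!catA.
  have Fz : path (frel (next d)) z (r2 ++ [:: x]).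
    by move: Fr; rewrite Esplit cat_path last_cat => /andP[].
  have Fp : path (frel (next d)) x (t ++ [:: z]).
    by move: Fr; rewrite Esplit cat_path => /andP[].
  have hx' : next d x = head z t.
    by case: (t) Fp => [|a t'] /= /andP[/eqP].
  have nonex u : u \in z :: r2 -> u \in c -> [set u; next d u] \in (Cof c).2.
    move=> uin uc.
    have ud : u \in d by rewrite ind in_cons mem_cat uin !orbT.
    have ux : u != x.
      apply/eqP => ux; move: Ud'; rewrite cons_uniq mem_cat -ux uin orbT.
      by [].
    apply/negPn/negP => nC.
    by have := uniqx u ud; rewrite /ex uc nC => /(_ isT) /eqP; rewrite (negbTE ux).
  have allc : all (fun u => u \in c) (z :: r2 ++ [:: x]).
    apply: (path_closure Fz) => // u; rewrite cats1 belast_rcons => uin uc.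
    exact: (edge_mem (nonex u uin uc)).2.
  have edC e : e \in pe z (r2 ++ [:: x]) -> e \in (Cof c).2.
    case/(pe_frel_in Fz) => u; rewrite cats1 belast_rcons => uin ->.
    apply: nonex => //; move/allP: allc; apply.
    by rewrite -cat_cons mem_cat uin.
  exists z, (r2 ++ [:: x]); split.
  - move: Ud'; rewrite -cat_cons uniq_catC -cat_cons.
    have -> : ((z :: r2) ++ x :: t) = (z :: r2 ++ [:: x]) ++ t by rewrite /= -catA.
    by rewrite cat_uniq => /andP[].
  - by move: Cd'; rewrite /cycle -cats1 /= Esplit cat_path last_cat => /andP[].
  - apply/setP => v; rewrite /sub_inter D1 in_setI !in_set.
    apply/andP/idP.
      case=> vc H; move: H; rewrite in_cons mem_cat in_cons.
      case/orP=> [/eqP ->|/orP[vt|/orP[/eqP ->|vr]]].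
      + by rewrite in_cons mem_cat mem_seq1 eqxx !orbT.
      + by rewrite (negbTE (tc v vt)) in vc.
      + by rewrite in_cons eqxx.
      + by rewrite in_cons mem_cat vr orbT.
    move=> vin; split; first by move/allP: allc; apply.
    move: vin; rewrite in_cons mem_cat mem_seq1 => /orP[/eqP ->|/orP[vr|/eqP ->]].
    + by rewrite in_cons mem_cat in_cons eqxx !orbT.
    + by rewrite in_cons mem_cat in_cons vr !orbT.
    + by rewrite in_cons eqxx.
  - apply/setP => e; rewrite /sub_inter D2 Esplit pe_cat last_cat !inE.
    apply/andP/idP.
      case=> eC /orP[ep|//].
      have := fp tc ep eC; rewrite -hx' => E'.
      by move: exC; rewrite -E' eC.
    by move=> ez; rewrite ez orbT edC.
exists x, [::]; split => //.
  apply/setP => v; rewrite /sub_inter D1 !inE.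
  apply/andP/idP; last by move/eqP ->; rewrite xc eqxx.
  case=> vc /orP[//|vr].
  by move/hasPn: hn => /(_ v vr); rewrite vc.
rewrite (_ : [set [set q.1; q.2] | q in zip [:: x] [::]] = pe x [::]) // pe_nil.
apply/setP => e; rewrite /sub_inter D2 !inE.
apply/negP => /andP[eC ep].
have := fp (t := r) (z := x) (fun v vr => (hasPn hn) v vr) ep eC.
rewrite -hx => E'.
by move: exC; rewrite -E' eC.
Qed.

Lemma main_seq :
  (forall O1 O2 O3 O4 : subgraph T, is_odd_cycle g O1 -> is_odd_cycle g O2 ->
     is_odd_cycle g O3 -> is_odd_cycle g O4 -> O1 <> O2 -> O1 <> O3 -> O1 <> O4 ->
     O2 <> O3 -> O2 <> O4 -> O3 <> O4 -> False) ->
  Cof c <> Cof d ->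
  sub_empty (sub_inter (Cof c) (Cof d)) \/ is_path_sub g (sub_inter (Cof c) (Cof d)).
Proof.
move=> four CD.
case: (boolP (has ex d)) => [/hasP [x xd exx] | hn]; last first.
  by left; apply: noexit => // w wd; apply: (hasPn hn).
case: (boolP (has (fun w => ex w && (w != x)) d)) => [/hasP [y yd /andP [exy yx]] | hn]; last first.
  right; apply: (oneexit xd exx) => w wd exw; apply/eqP.
  by move/hasPn: hn => /(_ w wd); rewrite exw /= negbK.
exfalso.
have /andP [yc eyC] := exy; have /andP [xc exC] := exx.
have xy : x != y by rewrite eq_sym.
have [Ox [Oxo Oxin Oxout]] := segD xd exx yd yc yx.
have [Oy [Oyo Oyin Oyout]] := segD yd exy xd xc xy.
have Dx : [set x; next d x] \in (Cof d).2 by apply/imsetP; exists x.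
have Dy : [set y; next d y] \in (Cof d).2 by apply/imsetP; exists y.
apply: (four (Cof c) (Cof d) Ox Oy) => //.
- exact: mk_odd.
- exact: mk_odd.
- by move=> E; rewrite -E in Oxin; rewrite Oxin in exC.
- by move=> E; rewrite -E in Oyin; rewrite Oyin in eyC.
- by move=> E; have := Oxout y yd yc yx eyC; rewrite -E Dy.
- by move=> E; have := Oyout x xd xc xy exC; rewrite -E Dx.
- by move=> E; have := Oyout x xd xc xy exC; rewrite -E Oxin.
Qed.

End Main.

Lemma oddc_seq (T : finType) (g : rel T) (C : subgraph T) : is_odd_cycle g C ->
  exists c, [/\ uniq c, 3 <= size c, odd (size c), cycle g c & C = Cof c].
Proof.
case=> k [[s [[U S Sk Cy E1] E2]] Ok]; exists s; split => //; first by rewrite Sk.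
by case: C E1 E2 => C1 C2 /= -> ->.
Qed.

Unset Implicit Arguments.
Set Strict Implicit.
Theorem lemma2p3 (T : finType) (g : rel T)
    (gsym : symmetric g) (girr : irreflexive g)
    (three : exists C1 C2 C3 : subgraph T,
        [/\ is_odd_cycle g C1, is_odd_cycle g C2, is_odd_cycle g C3,
            [/\ C1 <> C2, C1 <> C3 & C2 <> C3] &
            forall C, is_odd_cycle g C -> [\/ C = C1, C = C2 | C = C3]]) :
  forall C D : subgraph T, is_odd_cycle g C -> is_odd_cycle g D -> C <> D ->
    sub_empty (sub_inter C D) \/ is_path_sub g (sub_inter C D).
Proof.
move=> C D /oddc_seq [c [Uc Sc Oc Cc ->]] /oddc_seq [d [Ud Sd Od Cd ->]] CD.
apply: main_seq => // O1 O2 O3 O4 o1 o2 o3 o4 n12 n13 n14 n23 n24 n34.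
case: three => A1 [A2 [A3 [_ _ _ _ all3]]].
case: (all3 _ o1) => ?; case: (all3 _ o2) => ?; case: (all3 _ o3) => ?;
  case: (all3 _ o4) => ?; subst; congruence.
Qed.
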